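(* Let $\alpha,\beta,\gamma>-1$ and $\delta\neq\pm1$. For all $0\le k\le n$ (with the convention that $\mathcal J_{m,j}=0$ unless $0\le j\le m$), $$y\,\mathcal J_{n,k}=\widetilde a_{nk}\mathcal J_{n+1,k}+\widetilde b_{nk}\mathcal J_{n,k}+\widetilde c_{nk}\mathcal J_{n-1,k},$$ $$x\,\mathcal J_{n,k}=\widetilde e_{nk}\mathcal J_{n+1,k-1}+\widetilde f_{nk}\mathcal J_{n+1,k}+\widetilde g_{nk}\mathcal J_{n+1,k+1}+\widetilde r_{nk}\mathcal J_{n,k-1}+\widetilde s_{nk}\mathcal J_{n,k}+\widetilde t_{nk}\mathcal J_{n,k+1}+\widetilde u_{nk}\mathcal J_{n-1,k-1}+\widetilde v_{nk}\mathcal J_{n-1,k}+\widetilde w_{nk}\mathcal J_{n-1,k+1},$$ where, writing $\delta_j=(-1)^j\delta$, $\phi_k=(1-(-1)^k)/2$, $S=\alpha+\beta+\gamma$, $\widetilde\tau_k=\frac{k+\beta\phi_k}{2k+\beta+\gamma}$, $\widetilde\sigma_k=\frac{k+\beta\phi_k+\gamma+1}{2k+\beta+\gamma+2}$, $\widetilde z_n=\frac{(-1)^n-\delta(2n+S+2)}{(2n+S+1)(2n+S+3)}$, and (first case for $n+k$ even, second for $n+k$ odd): $\widetilde a_{nk}=\frac{1+\delta_n}{2n+S+3}\cdot\{n-k+\alpha+1;\ n+k+S+2\}$, $\widetilde c_{nk}=\frac{1+\delta_{n+1}}{2n+S+1}\cdot\{n-k;\ n+k+\beta+\gamma+1\}$,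 $\widetilde e_{nk}=\frac{\widetilde\tau_k(1-\delta_k)(1+\delta_n)}{2n+S+3}\cdot\{n-k+\alpha+1;\ n-k+\alpha+2\}$, $\widetilde g_{nk}=\frac{\widetilde\sigma_k(1+\delta_n)}{(1+\delta_k)(2n+S+3)}\cdot\{n+k+S+3;\ n+k+S+2\}$, $\widetilde r_{nk}=2\widetilde\tau_k\widetilde z_n((-1)^k-\delta)\cdot\{n-k+\alpha+1;\ n+k+\beta+\gamma+1\}$, $\widetilde t_{nk}=\frac{2(-1)^{k+1}\widetilde\sigma_k\widetilde z_n}{1+\delta_k}\cdot\{n-k;\ n+k+S+2\}$, $\widetilde u_{nk}=\frac{\widetilde\tau_k(1-\delta_k)(1-\delta_n)}{2n+S+1}\cdot\{n+k+\beta+\gamma;\ n+k+\beta+\gamma+1\}$, $\widetilde w_{nk}=\frac{\widetilde\sigma_k(1-\delta_n)}{(1+\delta_k)(2n+S+1)}\cdot\{n-k;\ n-k-1\}$, and $\widetilde b_{nk}=1-\widetilde a_{nk}-\widetilde c_{nk}$, $\widetilde f_{nk}=\widetilde a_{nk}(1-\widetilde\sigma_k-\widetilde\tau_k)$, $\widetilde s_{nk}=\widetilde b_{nk}(1-\widetilde\sigma_k-\widetilde\tau_k)-\delta_k(\widetilde\sigma_k-\widetilde\tau_k)$, $\widetilde v_{nk}=\widetilde c_{nk}(1-\widetilde\sigma_k-\widetilde\tau_k)$.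
   Context: For real $a,b$ and $c^2\neq1$, the Big $-1$ Jacobi polynomials are $$J_{n}(x;a,b,c)=\begin{cases}{}_2F_1\!\left(\begin{smallmatrix}-\frac n2,\ \frac{n+a+b+2}{2}\\ \frac{a+1}{2}\end{smallmatrix};\frac{1-x^2}{1-c^2}\right)+\frac{n(1-x)}{(1+c)(a+1)}\,{}_2F_1\!\left(\begin{smallmatrix}1-\frac n2,\ \frac{n+a+b+2}{2}\\ \frac{a+3}{2}\end{smallmatrix};\frac{1-x^2}{1-c^2}\right), & n\text{ even},\\[2mm] {}_2F_1\!\left(\begin{smallmatrix}-\frac{n-1}2,\ \frac{n+a+b+1}{2}\\ \frac{a+1}{2}\end{smallmatrix};\frac{1-x^2}{1-c^2}\right)-\frac{(n+a+b+1)(1-x)}{(1+c)(a+1)}\,{}_2F_1\!\left(\begin{smallmatrix}-\frac{n-1}2,\ \frac{n+a+b+3}{2}\\ \frac{a+3}{2}\end{smallmatrix};\frac{1-x^2}{1-c^2}\right), & n\text{ odd}.\end{cases}$$ Let $\rho_k(y)=y^k(1-\delta^2/y^2)^{k/2}$ for $k$ even and $\rho_k(y)=y^k(1-\delta^2/y^2)^{(k-1)/2}(1+\delta/y)$ for $k$ odd, and $$\mathcal{J}_{n,k}(x,y)=J_{n-k}\big(y;\alpha,2k+\beta+\gamma+1,(-1)^k\delta\big)\,\rho_k(y)\,J_k\Big(\frac{x}{y};\gamma,\beta,\frac{\delta}{y}\Big).$$ In the paper $\widetilde f_{nk}$ is printed with $\widetilde\tau_{n,k}$; it means $\widetilde\tau_k$.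 *)

(* Defs.v *)
(* the statement is a purely algebraic identity between
   rational functions, stated over an arbitrary real field R. *)
From HB Require Import structures.
From mathcomp Require Import all_boot all_order all_algebra.
Set Implicit Arguments. Unset Strict Implicit. Unset Printing Implicit Defensive.
Import Order.TTheory GRing.Theory Num.Theory.
Local Open Scope ring_scope.

Section BigMinusOneJacobi.
Variable R : realFieldType.

Definition poch (x : R) (j : nat) : R := \prod_(i < j) (x + i%:R).

(* terminating Gauss hypergeometric series 2F1(-m, b; c; z)
   (the series stops at j = m since (-m)_j = 0 for j > m) *)
Definition hyp2F1neg (m : nat) (b c z : R) : R :=
  \sum_(j < m.+1)
     poch (- m%:R) j * poch b j / (poch c j * (j`!)%:R) * z ^+ j.

Definition bigJ (n : nat) (a b c x : R) : R :=
  let z := (1 - x ^+ 2) / (1 - c ^+ 2) in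
  if ~~ odd n then
    hyp2F1neg n./2 ((n%:R + a + b + 2) / 2) ((a + 1) / 2) z
    + n%:R * (1 - x) / ((1 + c) * (a + 1))
      * hyp2F1neg n./2.-1 ((n%:R + a + b + 2) / 2) ((a + 3) / 2) z
  else
    hyp2F1neg n./2 ((n%:R + a + b + 1) / 2) ((a + 1) / 2) z
    - (n%:R + a + b + 1) * (1 - x) / ((1 + c) * (a + 1))
      * hyp2F1neg n./2 ((n%:R + a + b + 3) / 2) ((a + 3) / 2) z.

Definition rho (delta : R) (k : nat) (y : R) : R :=
  if ~~ odd k then y ^+ k * (1 - delta ^+ 2 / y ^+ 2) ^+ k./2
  else y ^+ k * (1 - delta ^+ 2 / y ^+ 2) ^+ k./2 * (1 + delta / y).

Definition calJnat (alpha beta gamma delta : R) (n k : nat) (x y : R) : R :=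
  bigJ (n - k) alpha (2 * k%:R + beta + gamma + 1) ((-1) ^+ k * delta) y
  * rho delta k y
  * bigJ k gamma beta (delta / y) (x / y).

Definition calJ (alpha beta gamma delta : R) (m j : int) (x y : R) : R :=
  if (0 <= j)%R && (j <= m)%R then calJnat alpha beta gamma delta `|m|%N `|j|%N x y
  else 0.

Definition dlt (delta : R) (j : nat) : R := (-1) ^+ j * delta.
Definition phi (k : nat) : R := (odd k)%:R.
Definition tauT (beta gamma : R) (k : nat) : R :=
  (k%:R + beta * phi k) / (2 * k%:R + beta + gamma).
Definition sigmaT (beta gamma : R) (k : nat) : R :=
  (k%:R + beta * phi k + gamma + 1) / (2 * k%:R + beta + gamma + 2).
Definition zT (alpha beta gamma delta : R) (n : nat) : R :=
  let S := alpha + beta + gamma in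
  ((-1) ^+ n - delta * (2 * n%:R + S + 2))
  / ((2 * n%:R + S + 1) * (2 * n%:R + S + 3)).

(* {A ; B}: A if n + k even, B if n + k odd *)
Definition parsel (n k : nat) (A B : R) : R := if ~~ odd (n + k) then A else B.

Section Coefs.
Variables (alpha beta gamma delta : R) (n k : nat).
Let S := alpha + beta + gamma.
Let N := n%:R : R.
Let K := k%:R : R.
Let tau := tauT beta gamma k.
Let sig := sigmaT beta gamma k.
Let z := zT alpha beta gamma delta n.

Definition aT : R := (1 + dlt delta n) / (2 * N + S + 3)
  * parsel n k (N - K + alpha + 1) (N + K + S + 2).
Definition cT : R := (1 + dlt delta n.+1) / (2 * N + S + 1)
  * parsel n k (N - K) (N + K + beta + gamma + 1).
Definition eT : R := tau * (1 - dlt delta k) * (1 + dlt delta n) / (2 * N + S + 3)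
  * parsel n k (N - K + alpha + 1) (N - K + alpha + 2).
Definition gT : R := sig * (1 + dlt delta n) / ((1 + dlt delta k) * (2 * N + S + 3))
  * parsel n k (N + K + S + 3) (N + K + S + 2).
Definition rT : R := 2 * tau * z * ((-1) ^+ k - delta)
  * parsel n k (N - K + alpha + 1) (N + K + beta + gamma + 1).
Definition tT : R := 2 * (-1) ^+ k.+1 * sig * z / (1 + dlt delta k)
  * parsel n k (N - K) (N + K + S + 2).
Definition uT : R := tau * (1 - dlt delta k) * (1 - dlt delta n) / (2 * N + S + 1)
  * parsel n k (N + K + beta + gamma) (N + K + beta + gamma + 1).
Definition wT : R := sig * (1 - dlt delta n) / ((1 + dlt delta k) * (2 * N + S + 1))
  * parsel n k (N - K) (N - K - 1).
Definition bT : R := 1 - aT - cT.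
Definition fT : R := aT * (1 - sig - tau).
Definition sT : R := bT * (1 - sig - tau) - dlt delta k * (sig - tau).
Definition vT : R := cT * (1 - sig - tau).
End Coefs.

End BigMinusOneJacobi.

(* Main.v *)
Require Import Defs.
From HB Require Import structures.
From mathcomp Require Import all_boot all_order all_algebra.
From mathcomp Require Import ring lra zify.
Import Order.TTheory GRing.Theory Num.Theory.
Local Open Scope ring_scope.
Set Implicit Arguments. Unset Strict Implicit. Unset Printing Implicit Defensive.

Section Infra.
Variable R : realFieldType.
Implicit Types (x y z B C h p : R).

Lemma poch0 x : poch x 0 = 1.
Proof. by rewrite /poch big_ord0. Qed.
Lemma pochE x n : poch x n.+1 = poch x n * (x + n%:R).
Proof. by rewrite /poch big_ord_recr. Qed.
Lemma poch_add x m n : poch x (m + n) = poch x m * poch (x + m%:R) n.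
Proof.
elim: n => [|n IH]; first by rewrite addn0 poch0 mulr1.
by rewrite addnS !pochE IH natrD -!mulrA addrA.
Qed.
Lemma poch_neg0 (l j : nat) : (l < j)%N -> poch (- l%:R : R) j = 0.
Proof.
move=> lj; by rewrite -(subnKC lj) poch_add pochE addNr mulr0 mul0r.
Qed.
Lemma poch_gt0 x n : 0 < x -> 0 < poch x n.
Proof.
move=> x0; elim: n => [|n IH]; first by rewrite poch0.
by rewrite pochE mulr_gt0 // ltr_wpDr.
Qed.
Lemma poch_neq0 x n : 0 < x -> poch x n != 0.
Proof. by move=> x0; rewrite gt_eqF ?poch_gt0. Qed.
Lemma fact_poch (i k : nat) : ((i + k)`!)%:R = (i`!)%:R * poch (i%:R + 1) k :> R.
Proof.
elim: k => [|k IH]; first by rewrite addn0 poch0 mulr1.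
rewrite addnS factS natrM IH pochE.
have -> : ((i + k).+1)%:R = i%:R + k%:R + 1 :> R by rewrite -addn1 !natrD.
ring.
Qed.

Definition tc (L : nat) B C (j : nat) : R :=
  poch (- L%:R) j * poch B j / (poch C j * (j`!)%:R).

Lemma tc_out L B C j : (L < j)%N -> tc L B C j = 0.
Proof. by move=> Lj; rewrite /tc poch_neg0 // !mul0r. Qed.

Definition c0 L B C (j : nat) : R := tc L B C j.
Definition c1 L B C (j : nat) : R := if j is i.+1 then tc L B C i else 0.
Definition PS z (N : nat) (f : nat -> R) : R := \sum_(j < N) f j * z ^+ j.

Lemma hyp_ext L B C z N : (L < N)%N ->
  hyp2F1neg L B C z = \sum_(j < N) tc L B C j * z ^+ j.
Proof.
move=> LN; rewrite /hyp2F1neg -(subnKC LN) big_split_ord /=.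
rewrite [X in _ = _ + X]big1 ?addr0 //.
by move=> j _; rewrite tc_out ?mul0r // ltnS leq_addr.
Qed.

Lemma F_PS0 L B C z N : (L < N)%N -> hyp2F1neg L B C z = PS z N (c0 L B C).
Proof. exact: hyp_ext. Qed.
Lemma F_PS1 L B C z N : (L.+1 < N)%N -> z * hyp2F1neg L B C z = PS z N (c1 L B C).
Proof.
move=> LN; rewrite /PS -(prednK (ltn_trans (ltn0Sn L) LN)) big_ord_recl /= mul0r add0r.
rewrite (hyp_ext _ _ _ (N:=N.-1)); last by rewrite -ltnS prednK // (ltn_trans _ LN).
by rewrite mulr_sumr; apply: eq_bigr => j _; rewrite exprS mulrCA.
Qed.
Lemma PS_add z N f g : PS z N f + PS z N g = PS z N (fun j => f j + g j).
Proof. by rewrite /PS -big_split; apply: eq_bigr => j _; rewrite mulrDl. Qed.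
Lemma PS_sub z N f g : PS z N f - PS z N g = PS z N (fun j => f j - g j).
Proof. by rewrite /PS -sumrB; apply: eq_bigr => j _; rewrite mulrBl. Qed.
Lemma PS_scale z N k f : k * PS z N f = PS z N (fun j => k * f j).
Proof. by rewrite /PS mulr_sumr; apply: eq_bigr => j _; rewrite mulrA. Qed.
Lemma PS_eq0 z N f : (forall j, f j = 0) -> PS z N f = 0.
Proof. by move=> f0; rewrite /PS big1 // => j _; rewrite f0 mul0r. Qed.

Lemma tcN (L : nat) B C (Xb Bb Cb : R) (dX eX dB eB dC eC k i n : nat) :
  0 < C ->
  - L%:R + dX%:R = Xb -> B + dB%:R = Bb -> C + dC%:R = Cb ->
  n = (dX + i + eX)%N -> n = (dB + i + eB)%N -> n = (dC + i + eC)%N -> n = (i + k)%N ->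
  tc L B C n = poch Xb i * poch Bb i / (poch Cb i * (i`!)%:R) *
   (poch (- L%:R) dX * poch (Xb + i%:R) eX * (poch B dB * poch (Bb + i%:R) eB)
    / (poch C dC * poch (Cb + i%:R) eC * poch (i%:R + 1) k)).
Proof.
move=> C0 EX EB EC n1 n2 n3 n4.
have Cb0 : 0 < Cb by rewrite -EC ltr_wpDr.
have Cbi0 : 0 < Cb + i%:R by rewrite ltr_wpDr.
rewrite /tc {1}n1 {1}n2 {1}n3 n4 !poch_add !natrD !addrA EX EB EC fact_poch.
have := poch_neq0 i Cb0; have := poch_neq0 eC Cbi0; have := poch_neq0 dC C0.
have : poch (i%:R + 1) k != 0 :> R by apply: poch_neq0; rewrite ltr_pwDr.
have : (i`!)%:R != 0 :> R by rewrite pnatr_eq0 -lt0n fact_gt0.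
move=> *; field; do ! (apply/andP; split) => //.
Qed.

End Infra.

Section Infra2.
Variable R : realFieldType.
Lemma tcE L (B C : R) j : tc L B C j = poch (- L%:R) j * poch B j / (poch C j * poch 1 j).
Proof.
have H : (j`!)%:R = poch 1 j :> R.
  by rewrite -{1}[j]add0n fact_poch mulr0n add0r fact0 mul1r.
by rewrite /tc H.
Qed.
End Infra2.

Ltac nz := match goal with
 | |- is_true true => done
 | H : is_true (?X != 0) |- is_true (?X != 0) => exact H
 | |- is_true (_ && _) => apply/andP; split; nz
 | |- is_true (_ * _ != 0) => apply: mulf_neq0; nz
 | |- is_true (_^-1 != 0) => apply: invr_neq0; nz
 | |- is_true (- _ != 0) => rewrite oppr_eq0; nz
 | |- is_true (poch _ _ != 0) => apply: poch_neq0; lra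
 | |- is_true ((_`!)%:R != 0) => by rewrite pnatr_eq0 -lt0n fact_gt0
 | |- _ => apply: lt0r_neq0; lra end.


Ltac solve_req := ring.
Ltac solve_pos := lra.
Ltac tcn L B C n Xb Bb Cb dX eX dB eB dC eC k i :=
  let E := fresh "E" in
  have E := @tcN _ L B C Xb Bb Cb dX eX dB eB dC eC k i n
     ltac:(solve_pos) ltac:(solve_req) ltac:(solve_req) ltac:(solve_req)
     ltac:(lia) ltac:(lia) ltac:(lia) ltac:(lia);
  rewrite E {E}.
Ltac small := rewrite ?tcE ?pochE ?poch0; field; nz.

Section Ids.
Variable R : realFieldType.
Definition Fm (h p z : R) (l e d : nat) := hyp2F1neg l (l%:R + h + e%:R) (p + d%:R) z.

Lemma Fm0 (h p z : R) e d : Fm h p z 0 e d = 1.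
Proof. by rewrite /Fm /hyp2F1neg big_ord1 /tc !poch0 /= mulr1 divr1 expr0 mulr1. Qed.

Lemma Fm1 (h p z : R) e d : 0 < p + d%:R ->
  Fm h p z 1 e d = 1 - (1%:R + h + e%:R) / (p + d%:R) * z.
Proof.
move=> hp; rewrite /Fm /hyp2F1neg !big_ord_recr big_ord0 /= ?pochE ?poch0 ?factS ?fact0.
rewrite expr0 expr1; field; nz.
Qed.

Lemma I1 (h p c z : R) (l : nat) : 0 < p ->
  (2 * l%:R + h + 2) * (z * Fm h p z l 2 1) = p * (Fm h p z l 1 0 - Fm h p z l.+1 1 0).
Proof.
move=> *.
rewrite /Fm; apply/eqP; rewrite -subr_eq0; apply/eqP.
rewrite ?(@F_PS1 _ _ _ _ _ l.+4) ?(@F_PS0 _ _ _ _ _ l.+4).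
all: try by lia.
rewrite !(PS_sub, PS_add, PS_scale); apply: PS_eq0 => j /=.
have l0 : 0 <= l%:R :> R := ler0n _ _.
have l1 : 0 <= l.+1%:R :> R := ler0n _ _.
have l2 : 0 <= l.+2%:R :> R := ler0n _ _.
rewrite /c0 /c1; case: j => [|[|[|i]]] /=; [small|small|small|].
have i0 : 0 <= i%:R :> R := ler0n _ _.
tcn l (l%:R + h + 2%:R) (p + 1%:R) i.+2 (-l%:R : R) (l%:R + h + 2%:R) (p + 1%:R) 0%N 2%N 0%N 2%N 0%N 2%N 2%N i.
tcn l (l%:R + h + 1%:R) (p + 0%:R) i.+3 (-l%:R : R) (l%:R + h + 2%:R) (p + 1%:R) 0%N 3%N 1%N 2%N 1%N 2%N 3%N i.
tcn l.+1 (l.+1%:R + h + 1%:R) (p + 0%:R) i.+3 (-l%:R : R) (l%:R + h + 2%:R) (p + 1%:R) 1%N 2%N 0%N 3%N 1%N 2%N 3%N i.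
rewrite !pochE !poch0.
field; nz.
Qed.

Lemma I2 (h p c z : R) (l : nat) : 0 < p ->
  p * (2 * l%:R + h + 3) * Fm h p z l.+1 1 0 = (l%:R + h + 2) * (l%:R + p + 1) * Fm h p z l.+1 2 1 - (l%:R + 1) * (l%:R + h - p + 2) * Fm h p z l 2 1.
Proof.
move=> *.
rewrite /Fm; apply/eqP; rewrite -subr_eq0; apply/eqP.
rewrite ?(@F_PS1 _ _ _ _ _ l.+4) ?(@F_PS0 _ _ _ _ _ l.+4).
all: try by lia.
rewrite !(PS_sub, PS_add, PS_scale); apply: PS_eq0 => j /=.
have l0 : 0 <= l%:R :> R := ler0n _ _.
have l1 : 0 <= l.+1%:R :> R := ler0n _ _.
have l2 : 0 <= l.+2%:R :> R := ler0n _ _.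
rewrite /c0 /c1; case: j => [|[|[|i]]] /=; [small|small|small|].
have i0 : 0 <= i%:R :> R := ler0n _ _.
tcn l.+1 (l.+1%:R + h + 1%:R) (p + 0%:R) i.+3 (-l%:R : R) (l%:R + h + 3%:R) (p + 1%:R) 1%N 2%N 1%N 2%N 1%N 2%N 3%N i.
tcn l.+1 (l.+1%:R + h + 2%:R) (p + 1%:R) i.+3 (-l%:R : R) (l%:R + h + 3%:R) (p + 1%:R) 1%N 2%N 0%N 3%N 0%N 3%N 3%N i.
tcn l (l%:R + h + 2%:R) (p + 1%:R) i.+3 (-l%:R : R) (l%:R + h + 3%:R) (p + 1%:R) 0%N 3%N 1%N 2%N 0%N 3%N 3%N i.
rewrite !pochE !poch0.
field; nz.
Qed.

Lemma I3a (h p c z : R) (l : nat) : 0 < p ->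
  (2 * l%:R + h + 1) * Fm h p z l 1 0 = (l%:R + h + 1) * Fm h p z l 2 0 + l%:R * Fm h p z l.-1 2 0.
Proof.
move=> *.
case: l => [|l] /=.
  by rewrite !Fm0; ring.
rewrite /Fm; apply/eqP; rewrite -subr_eq0; apply/eqP.
rewrite ?(@F_PS1 _ _ _ _ _ l.+4) ?(@F_PS0 _ _ _ _ _ l.+4).
all: try by lia.
rewrite !(PS_sub, PS_add, PS_scale); apply: PS_eq0 => j /=.
have l0 : 0 <= l%:R :> R := ler0n _ _.
have l1 : 0 <= l.+1%:R :> R := ler0n _ _.
have l2 : 0 <= l.+2%:R :> R := ler0n _ _.
rewrite /c0 /c1; case: j => [|[|[|i]]] /=; [small|small|small|].
have i0 : 0 <= i%:R :> R := ler0n _ _.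
tcn l.+1 (l.+1%:R + h + 1%:R) (p + 0%:R) i.+3 (-l%:R : R) (l%:R + h + 3%:R) (p + 1%:R) 1%N 2%N 1%N 2%N 1%N 2%N 3%N i.
tcn l.+1 (l.+1%:R + h + 2%:R) (p + 0%:R) i.+3 (-l%:R : R) (l%:R + h + 3%:R) (p + 1%:R) 1%N 2%N 0%N 3%N 1%N 2%N 3%N i.
tcn l (l%:R + h + 2%:R) (p + 0%:R) i.+3 (-l%:R : R) (l%:R + h + 3%:R) (p + 1%:R) 0%N 3%N 1%N 2%N 1%N 2%N 3%N i.
rewrite !pochE !poch0.
field; nz.
Qed.

Lemma I3b (h p c z : R) (l : nat) : 0 < p ->
  (2 * l%:R + h + 2) * Fm h p z l 2 1 = (l%:R + h + 2) * Fm h p z l 3 1 + l%:R * Fm h p z l.-1 3 1.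
Proof.
move=> *.
case: l => [|l] /=.
  by rewrite !Fm0; ring.
rewrite /Fm; apply/eqP; rewrite -subr_eq0; apply/eqP.
rewrite ?(@F_PS1 _ _ _ _ _ l.+4) ?(@F_PS0 _ _ _ _ _ l.+4).
all: try by lia.
rewrite !(PS_sub, PS_add, PS_scale); apply: PS_eq0 => j /=.
have l0 : 0 <= l%:R :> R := ler0n _ _.
have l1 : 0 <= l.+1%:R :> R := ler0n _ _.
have l2 : 0 <= l.+2%:R :> R := ler0n _ _.
rewrite /c0 /c1; case: j => [|[|[|i]]] /=; [small|small|small|].
have i0 : 0 <= i%:R :> R := ler0n _ _.
tcn l.+1 (l.+1%:R + h + 2%:R) (p + 1%:R) i.+3 (-l%:R : R) (l%:R + h + 4%:R) (p + 1%:R) 1%N 2%N 1%N 2%N 0%N 3%N 3%N i.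
tcn l.+1 (l.+1%:R + h + 3%:R) (p + 1%:R) i.+3 (-l%:R : R) (l%:R + h + 4%:R) (p + 1%:R) 1%N 2%N 0%N 3%N 0%N 3%N 3%N i.
tcn l (l%:R + h + 3%:R) (p + 1%:R) i.+3 (-l%:R : R) (l%:R + h + 4%:R) (p + 1%:R) 0%N 3%N 1%N 2%N 0%N 3%N 3%N i.
rewrite !pochE !poch0.
field; nz.
Qed.

Lemma I4 (h p c z : R) (l : nat) : 0 < p -> 0 < h ->
  (1 - c) * Fm h p z l 1 0 - (1 + c) * (z * Fm h p z l 1 0) - 2 * c * l%:R / p * (z * Fm h p z l.-1 2 1) = (1 + c) * (l%:R + p) / (2 * l%:R + h + 1) * Fm h p z l.+1 0 0 + ((1 - c * (4 * l%:R + 2 * h + 1)) * (l%:R + p) / ((2 * l%:R + h) * (2 * l%:R + h + 1)) + (1 - c) * (l%:R + h - p) / (2 * l%:R + h)) * Fm h p z l 0 0.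
Proof.
move=> *.
case: l => [|l] /=.
  rewrite !Fm0 Fm1; [field; nz|lra].
rewrite /Fm; apply/eqP; rewrite -subr_eq0; apply/eqP.
rewrite ?(@F_PS1 _ _ _ _ _ l.+4) ?(@F_PS0 _ _ _ _ _ l.+4).
all: try by lia.
rewrite !(PS_sub, PS_add, PS_scale); apply: PS_eq0 => j /=.
have l0 : 0 <= l%:R :> R := ler0n _ _.
have l1 : 0 <= l.+1%:R :> R := ler0n _ _.
have l2 : 0 <= l.+2%:R :> R := ler0n _ _.
rewrite /c0 /c1; case: j => [|[|[|i]]] /=; [small|small|small|].
have i0 : 0 <= i%:R :> R := ler0n _ _.
tcn l.+1 (l.+1%:R + h + 1%:R) (p + 0%:R) i.+3 (-l%:R : R) (l%:R + h + 2%:R) (p + 1%:R) 1%N 2%N 0%N 3%N 1%N 2%N 3%N i.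
tcn l.+1 (l.+1%:R + h + 1%:R) (p + 0%:R) i.+2 (-l%:R : R) (l%:R + h + 2%:R) (p + 1%:R) 1%N 1%N 0%N 2%N 1%N 1%N 2%N i.
tcn l (l%:R + h + 2%:R) (p + 1%:R) i.+2 (-l%:R : R) (l%:R + h + 2%:R) (p + 1%:R) 0%N 2%N 0%N 2%N 0%N 2%N 2%N i.
tcn l.+2 (l.+2%:R + h + 0%:R) (p + 0%:R) i.+3 (-l%:R : R) (l%:R + h + 2%:R) (p + 1%:R) 2%N 1%N 0%N 3%N 1%N 2%N 3%N i.
tcn l.+1 (l.+1%:R + h + 0%:R) (p + 0%:R) i.+3 (-l%:R : R) (l%:R + h + 2%:R) (p + 1%:R) 1%N 2%N 1%N 2%N 1%N 2%N 3%N i.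
rewrite !pochE !poch0.
field; nz.
Qed.

Lemma I5 (h p c z : R) (l : nat) : 0 < p -> 0 < h ->
  2 * c * p * Fm h p z l 1 0 + (1 + c) * l%:R * Fm h p z l.-1 2 1 - (1 - c) * l%:R * (z * Fm h p z l.-1 2 1) = ((1 + c) * (l%:R + p) * (l%:R + 1) / (2 * l%:R + h + 1) - (1 - c * (4 * l%:R + 2 * h + 1)) * (l%:R + p) * (l%:R + h) / ((2 * l%:R + h) * (2 * l%:R + h + 1))) * Fm h p z l 1 1 + (1 - c) * (l%:R + h - p) * l%:R / (2 * l%:R + h) * Fm h p z l.-1 1 1.
Proof.
move=> *.
case: l => [|l] /=.
  rewrite !Fm0; field; nz.
rewrite /Fm; apply/eqP; rewrite -subr_eq0; apply/eqP.
rewrite ?(@F_PS1 _ _ _ _ _ l.+4) ?(@F_PS0 _ _ _ _ _ l.+4).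
all: try by lia.
rewrite !(PS_sub, PS_add, PS_scale); apply: PS_eq0 => j /=.
have l0 : 0 <= l%:R :> R := ler0n _ _.
have l1 : 0 <= l.+1%:R :> R := ler0n _ _.
have l2 : 0 <= l.+2%:R :> R := ler0n _ _.
rewrite /c0 /c1; case: j => [|[|[|i]]] /=; [small|small|small|].
have i0 : 0 <= i%:R :> R := ler0n _ _.
tcn l.+1 (l.+1%:R + h + 1%:R) (p + 0%:R) i.+3 (-l%:R : R) (l%:R + h + 2%:R) (p + 1%:R) 1%N 2%N 0%N 3%N 1%N 2%N 3%N i.
tcn l (l%:R + h + 2%:R) (p + 1%:R) i.+3 (-l%:R : R) (l%:R + h + 2%:R) (p + 1%:R) 0%N 3%N 0%N 3%N 0%N 3%N 3%N i.
tcn l (l%:R + h + 2%:R) (p + 1%:R) i.+2 (-l%:R : R) (l%:R + h + 2%:R) (p + 1%:R) 0%N 2%N 0%N 2%N 0%N 2%N 2%N i.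
tcn l.+1 (l.+1%:R + h + 1%:R) (p + 1%:R) i.+3 (-l%:R : R) (l%:R + h + 2%:R) (p + 1%:R) 1%N 2%N 0%N 3%N 0%N 3%N 3%N i.
tcn l (l%:R + h + 1%:R) (p + 1%:R) i.+3 (-l%:R : R) (l%:R + h + 2%:R) (p + 1%:R) 0%N 3%N 1%N 2%N 0%N 3%N 3%N i.
rewrite !pochE !poch0.
field; nz.
Qed.

Lemma I6 (h p c z : R) (l : nat) : 0 < p -> 0 < h ->
  (1 - c) * Fm h p z l 1 0 - (1 + c) * (z * Fm h p z l 1 0) + 2 * c * (l%:R + h + 1) / p * (z * Fm h p z l 2 1) = ((1 - c) * (l%:R + p + 1) * (2 * l%:R + h + 1) - (1 + c * (4 * l%:R + 2 * h + 3)) * (l%:R + h - p + 1)) / ((2 * l%:R + h + 1) * (2 * l%:R + h + 2)) * Fm h p z l.+1 0 0 + (1 + c) * (l%:R + h - p + 1) / (2 * l%:R + h + 1) * Fm h p z l 0 0.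
Proof.
move=> *.
rewrite /Fm; apply/eqP; rewrite -subr_eq0; apply/eqP.
rewrite ?(@F_PS1 _ _ _ _ _ l.+4) ?(@F_PS0 _ _ _ _ _ l.+4).
all: try by lia.
rewrite !(PS_sub, PS_add, PS_scale); apply: PS_eq0 => j /=.
have l0 : 0 <= l%:R :> R := ler0n _ _.
have l1 : 0 <= l.+1%:R :> R := ler0n _ _.
have l2 : 0 <= l.+2%:R :> R := ler0n _ _.
rewrite /c0 /c1; case: j => [|[|[|i]]] /=; [small|small|small|].
have i0 : 0 <= i%:R :> R := ler0n _ _.
tcn l (l%:R + h + 1%:R) (p + 0%:R) i.+3 (-l%:R : R) (l%:R + h + 2%:R) (p + 1%:R) 0%N 3%N 1%N 2%N 1%N 2%N 3%N i.
tcn l (l%:R + h + 1%:R) (p + 0%:R) i.+2 (-l%:R : R) (l%:R + h + 2%:R) (p + 1%:R) 0%N 2%N 1%N 1%N 1%N 1%N 2%N i.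
tcn l (l%:R + h + 2%:R) (p + 1%:R) i.+2 (-l%:R : R) (l%:R + h + 2%:R) (p + 1%:R) 0%N 2%N 0%N 2%N 0%N 2%N 2%N i.
tcn l.+1 (l.+1%:R + h + 0%:R) (p + 0%:R) i.+3 (-l%:R : R) (l%:R + h + 2%:R) (p + 1%:R) 1%N 2%N 1%N 2%N 1%N 2%N 3%N i.
tcn l (l%:R + h + 0%:R) (p + 0%:R) i.+3 (-l%:R : R) (l%:R + h + 2%:R) (p + 1%:R) 0%N 3%N 2%N 1%N 1%N 2%N 3%N i.
rewrite !pochE !poch0.
field; nz.
Qed.

Lemma I7 (h p c z : R) (l : nat) : 0 < p -> 0 < h ->
  2 * c * p * Fm h p z l 1 0 - (1 + c) * (l%:R + h + 1) * Fm h p z l 2 1 + (1 - c) * (l%:R + h + 1) * (z * Fm h p z l 2 1) = - ((1 - c) * (l%:R + p + 1) * (l%:R + h + 1) / (2 * l%:R + h + 2)) * Fm h p z l.+1 1 1 + ((- 1 - c * (4 * l%:R + 2 * h + 3)) * (l%:R + h - p + 1) * (l%:R + 1) / ((2 * l%:R + h + 1) * (2 * l%:R + h + 2)) - (1 + c) * (l%:R + h - p + 1) * (l%:R + h) / (2 * l%:R + h + 1)) * Fm h p z l 1 1.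
Proof.
move=> *.
rewrite /Fm; apply/eqP; rewrite -subr_eq0; apply/eqP.
rewrite ?(@F_PS1 _ _ _ _ _ l.+4) ?(@F_PS0 _ _ _ _ _ l.+4).
all: try by lia.
rewrite !(PS_sub, PS_add, PS_scale); apply: PS_eq0 => j /=.
have l0 : 0 <= l%:R :> R := ler0n _ _.
have l1 : 0 <= l.+1%:R :> R := ler0n _ _.
have l2 : 0 <= l.+2%:R :> R := ler0n _ _.
rewrite /c0 /c1; case: j => [|[|[|i]]] /=; [small|small|small|].
have i0 : 0 <= i%:R :> R := ler0n _ _.
tcn l (l%:R + h + 1%:R) (p + 0%:R) i.+3 (-l%:R : R) (l%:R + h + 2%:R) (p + 1%:R) 0%N 3%N 1%N 2%N 1%N 2%N 3%N i.
tcn l (l%:R + h + 2%:R) (p + 1%:R) i.+3 (-l%:R : R) (l%:R + h + 2%:R) (p + 1%:R) 0%N 3%N 0%N 3%N 0%N 3%N 3%N i.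
tcn l (l%:R + h + 2%:R) (p + 1%:R) i.+2 (-l%:R : R) (l%:R + h + 2%:R) (p + 1%:R) 0%N 2%N 0%N 2%N 0%N 2%N 2%N i.
tcn l.+1 (l.+1%:R + h + 1%:R) (p + 1%:R) i.+3 (-l%:R : R) (l%:R + h + 2%:R) (p + 1%:R) 1%N 2%N 0%N 3%N 0%N 3%N 3%N i.
tcn l (l%:R + h + 1%:R) (p + 1%:R) i.+3 (-l%:R : R) (l%:R + h + 2%:R) (p + 1%:R) 0%N 3%N 1%N 2%N 0%N 3%N 3%N i.
rewrite !pochE !poch0.
field; nz.
Qed.

End Ids.


Section OneD.
Variable R : realFieldType.
Implicit Types (a b c x h p : R).

Definition zz (c x : R) := (1 - x ^+ 2) / (1 - c ^+ 2).

Lemma bigJ_even a b c x l h e p : (a + 1) / 2 = p -> (a + b) / 2 + 1 = h + e%:R ->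
  bigJ (l.*2) a b c x = Fm h p (zz c x) l e 0
    + (l.*2)%:R * (1 - x) / ((1 + c) * (a + 1)) * Fm h p (zz c x) l.-1 e.+1 1.
Proof.
move=> Hp He; have Hh : h = (a + b) / 2 + 1 - e%:R by rewrite He; ring.
 rewrite /bigJ odd_double /= doubleK /Fm -/(zz c x) Hp addr0.
have -> : ((l.*2)%:R + a + b + 2) / 2 = l%:R + h + e%:R.
  by rewrite Hh -muln2 natrM; field.
case: l => [|l] /=; first by rewrite !mulr0n !mul0r.
congr (_ + _ * _); congr (hyp2F1neg _ _ _ _).
  by ring.
by rewrite -Hp; field.
Qed.

Lemma bigJ_odd a b c x l h e p : (a + 1) / 2 = p -> (a + b) / 2 + 1 = h + e%:R ->
  bigJ (l.*2.+1) a b c x = Fm h p (zz c x) l e 0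
    - 2 * (l%:R + h + e%:R) * (1 - x) / ((1 + c) * (a + 1)) * Fm h p (zz c x) l e.+1 1.
Proof.
move=> Hp He; have Hh : h = (a + b) / 2 + 1 - e%:R by rewrite He; ring.
 rewrite /bigJ /= odd_double /= uphalf_double /Fm -/(zz c x) Hp addr0.
have -> : ((l.*2.+1)%:R + a + b + 1) / 2 = l%:R + h + e%:R.
  by rewrite Hh -addn1 -muln2 natrD natrM; field.
have -> : (l.*2.+1)%:R + a + b + 1 = 2 * (l%:R + h + e%:R).
  by rewrite Hh -addn1 -muln2 natrD natrM; field.
congr (_ - _ * _); congr (hyp2F1neg _ _ _ _).
  by rewrite Hh -addn1 -muln2 natrD natrM mulrSr; field.
by rewrite -Hp; field.
Qed.
End OneD.


Section R1.
Variable R : realFieldType.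
Implicit Types (a b c x h p : R).

Definition A1 a b c (m : nat) := (1 + (-1) ^+ m * c) / (2 * m%:R + a + b + 2)
  * (if odd m then m%:R + a + b + 1 else m%:R + a + 1).
Definition C1 a b c (m : nat) := (1 - (-1) ^+ m * c) / (2 * m%:R + a + b)
  * (if odd m then m%:R + b else m%:R).

Lemma natr_dbl (n : nat) : (n.*2)%:R = 2 * n%:R :> R.
Proof. by rewrite -muln2 natrM mulrC. Qed.

Lemma evod (m : nat) : exists l, m = l.*2 \/ m = l.*2.+1.
Proof.
exists m./2; case: (boolP (odd m)) => om; [right|left];
  by rewrite -{1}(odd_double_half m) ?om ?(negbTE om).
Qed.

Lemma R1 a b c x m : -1 < a -> -1 < b -> 1 - c ^+ 2 != 0 -> 1 + c != 0 ->
  x * bigJ m a b c x = A1 a b c m * bigJ m.+1 a b c x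
    + (1 - A1 a b c m - C1 a b c m) * bigJ m a b c x + C1 a b c m * bigJ m.-1 a b c x.
Proof.
move=> ha hb hD hc.
pose p := (a + 1) / 2; pose h := (a + b) / 2.
have Hp : (a + 1) / 2 = p by [].
have He : (a + b) / 2 + 1 = h + 1%:R by [].
have hp : 0 < p by rewrite /p; lra.
have hh : -1 < h by rewrite /h; lra.
have Ea : a = 2 * p - 1 by rewrite /p; field.
have Eb : b = 2 * h - 2 * p + 1 by rewrite /h /p; field.
clearbody p h.
have bE := fun l => @bigJ_even _ a b c x l h 1 p Hp He.
have bO := fun l => @bigJ_odd _ a b c x l h 1 p Hp He.
have [l [->|->]] := evod m.
- case: l => [|l].
  + have -> : C1 a b c 0 = 0 by rewrite /C1 /= mulr0n mulr0.
    rewrite (bE 0) (bO 0) /= !Fm0 /A1 -signr_odd /= -?muln2.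
    rewrite Ea Eb /zz. field; nz.
  + rewrite (bE l.+1) (bO l.+1) (bO l) /= /A1 /C1 -signr_odd /= odd_double /= -?muln2 ?natrM.
    have l0 : 0 <= l%:R :> R := ler0n _ _.
    have l1 : 0 <= l.+1%:R :> R := ler0n _ _.
    have E4 : Fm h p (zz c x) l 1 0 = Fm h p (zz c x) l.+1 1 0
        + (2 * l%:R + h + 2) * (zz c x * Fm h p (zz c x) l 2 1) / p.
      by rewrite (I1 h c (zz c x) l hp); field; nz.
    have E3 : Fm h p (zz c x) l.+1 2 1 = (p * (2 * l%:R + h + 3) * Fm h p (zz c x) l.+1 1 0
        + (l%:R + 1) * (l%:R + h - p + 2) * Fm h p (zz c x) l 2 1) / ((l%:R + h + 2) * (l%:R + p + 1)).
      rewrite (I2 h c (zz c x) l hp); field; nz.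
    rewrite E4 E3 Ea Eb /zz.
    field; nz.
- case: l => [|l].
  + rewrite (bE 1) (bO 0) (bE 0) /= !Fm0 Fm1; last by lra.
    rewrite /A1 /C1 -signr_odd /= -?muln2 ?natrM.
    rewrite Ea Eb /zz. field; nz.
  + rewrite (bE l.+2) (bO l.+1) (bE l.+1) /= /A1 /C1 -signr_odd /= odd_double /= -?muln2 ?natrM.
    have l0 : 0 <= l%:R :> R := ler0n _ _.
    have l1 : 0 <= l.+1%:R :> R := ler0n _ _.
    have l2 : 0 <= l.+2%:R :> R := ler0n _ _.
    have E5 : Fm h p (zz c x) l.+2 1 0 = Fm h p (zz c x) l.+1 1 0
        - (2 * l.+1%:R + h + 2) * (zz c x * Fm h p (zz c x) l.+1 2 1) / p.
      by rewrite (I1 h c (zz c x) l.+1 hp); field; nz.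
    have E3 : Fm h p (zz c x) l.+1 2 1 = (p * (2 * l%:R + h + 3) * Fm h p (zz c x) l.+1 1 0
        + (l%:R + 1) * (l%:R + h - p + 2) * Fm h p (zz c x) l 2 1) / ((l%:R + h + 2) * (l%:R + p + 1)).
      by rewrite (I2 h c (zz c x) l hp); field; nz.
    rewrite E5 E3 Ea Eb /zz.
    field; nz.
Qed.
End R1.


Section R2.
Variable R : realFieldType.
Implicit Types (a b c x h p : R).

Lemma zzN c x : zz (- c) x = zz c x :> R.
Proof. by rewrite /zz sqrrN. Qed.

Definition G2 a b c (m : nat) := (1 + (-1) ^+ m * c) / ((1 + c) * (2 * m%:R + a + b + 2))
  * (if odd m then m%:R + a + b + 1 else m%:R + a + b + 2).
Definition T2 a b c (m : nat) := 2 * (c * (2 * m%:R + a + b + 1) - (-1) ^+ m)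
  / ((1 + c) * (2 * m%:R + a + b) * (2 * m%:R + a + b + 2))
  * (if odd m then m%:R + a + b + 1 else m%:R).
Definition W2 a b c (m : nat) := (1 - (-1) ^+ m * c) / ((1 + c) * (2 * m%:R + a + b))
  * (if odd m then m%:R - 1 else m%:R).

Lemma R2 a b c x m : -1 < a -> -1 < b -> 1 - c ^+ 2 != 0 -> 1 + c != 0 -> 1 - c != 0 ->
  bigJ m a b c x = G2 a b c m * bigJ m a (b + 2) (- c) x
    + T2 a b c m * bigJ m.-1 a (b + 2) (- c) x + W2 a b c m * bigJ m.-2 a (b + 2) (- c) x.
Proof.
move=> ha hb hD hc hc'.
pose p := (a + 1) / 2; pose h := (a + b) / 2.
have Hp : (a + 1) / 2 = p by [].
have He : (a + b) / 2 + 1 = h + 1%:R by [].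
have He2 : (a + (b + 2)) / 2 + 1 = h + 2%:R by rewrite /h; field.
have hp : 0 < p by rewrite /p; lra.
have hh : -1 < h by rewrite /h; lra.
have Ea : a = 2 * p - 1 by rewrite /p; field.
have Eb : b = 2 * h - 2 * p + 1 by rewrite /h /p; field.
clearbody p h.
have bE := fun l => @bigJ_even _ a b c x l h 1 p Hp He.
have bO := fun l => @bigJ_odd _ a b c x l h 1 p Hp He.
have bE' := fun l => @bigJ_even _ a (b + 2) (- c) x l h 2 p Hp He2.
have bO' := fun l => @bigJ_odd _ a (b + 2) (- c) x l h 2 p Hp He2.
have [l [->|->]] := evod m.
- case: l => [|l].
  + have -> : T2 a b c 0 = 0 by rewrite /T2 /= mulr0n mulr0.
    have -> : W2 a b c 0 = 0 by rewrite /W2 /= mulr0n mulr0.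
    rewrite (bE 0) (bE' 0) /= !Fm0 /G2 -signr_odd /= -?muln2 ?natrM.
    rewrite Ea Eb /zz. field; nz.
  + rewrite (bE l.+1) (bE' l.+1) (bO' l) (bE' l) /= /G2 /T2 /W2 -signr_odd /= odd_double /= -?muln2 ?natrM !zzN.
    have l0 : 0 <= l%:R :> R := ler0n _ _.
    have l1 : 0 <= l.+1%:R :> R := ler0n _ _.
    have E1 : Fm h p (zz c x) l.+1 1 0 = ((l.+1%:R + h + 1) * Fm h p (zz c x) l.+1 2 0
        + l.+1%:R * Fm h p (zz c x) l 2 0) / (2 * l.+1%:R + h + 1).
      apply: (@mulfI _ (2 * l.+1%:R + h + 1)); first by nz.
      by rewrite (I3a h c (zz c x) l.+1 hp) /=; field; nz.
    have E2 : Fm h p (zz c x) l 2 1 = ((l%:R + h + 2) * Fm h p (zz c x) l 3 1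
        + l%:R * Fm h p (zz c x) l.-1 3 1) / (2 * l%:R + h + 2).
      apply: (@mulfI _ (2 * l%:R + h + 2)); first by nz.
      by rewrite (I3b h c (zz c x) l hp) /=; field; nz.
    rewrite E1 E2 Ea Eb /zz.
    field; nz.
- case: l => [|l].
  + rewrite (bO 0) (bO' 0) (bE' 0) /= !Fm0 /G2 /T2 /W2 -signr_odd /= -?muln2 ?natrM.
    rewrite Ea Eb /zz. field; nz.
  + rewrite (bO l.+1) (bO' l.+1) (bE' l.+1) (bO' l) /= /G2 /T2 /W2 -signr_odd /= odd_double /= -?muln2 ?natrM !zzN.
    have l0 : 0 <= l%:R :> R := ler0n _ _.
    have l1 : 0 <= l.+1%:R :> R := ler0n _ _.
    have E1 : Fm h p (zz c x) l.+1 1 0 = ((l.+1%:R + h + 1) * Fm h p (zz c x) l.+1 2 0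
        + l.+1%:R * Fm h p (zz c x) l 2 0) / (2 * l.+1%:R + h + 1).
      apply: (@mulfI _ (2 * l.+1%:R + h + 1)); first by nz.
      by rewrite (I3a h c (zz c x) l.+1 hp) /=; field; nz.
    have E2 : Fm h p (zz c x) l.+1 2 1 = ((l.+1%:R + h + 2) * Fm h p (zz c x) l.+1 3 1
        + l.+1%:R * Fm h p (zz c x) l 3 1) / (2 * l.+1%:R + h + 2).
      apply: (@mulfI _ (2 * l.+1%:R + h + 2)); first by nz.
      by rewrite (I3b h c (zz c x) l.+1 hp) /=; field; nz.
    rewrite E1 E2 Ea Eb /zz.
    field; nz.
Qed.
End R2.


Section R3.
Variable R : realFieldType.
Implicit Types (a b c x h p : R).

Lemma solve1 (k X L M : R) : k != 0 -> L = k * X + M -> X = (L - M) / k.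
Proof. by move=> k0 ->; field. Qed.
Lemma solve2 (k X L M : R) : k != 0 -> L = M + k * X -> X = (L - M) / k.
Proof. by move=> k0 ->; field. Qed.

Definition E3 a b c (m : nat) := (1 - c) * (1 + (-1) ^+ m * c) / (2 * m%:R + a + b + 2)
  * (if odd m then m%:R + a + 2 else m%:R + a + 1).
Definition Rr3 a b c (m : nat) := 2 * (1 - c) * ((-1) ^+ m - c * (2 * m%:R + a + b + 1))
  / ((2 * m%:R + a + b) * (2 * m%:R + a + b + 2))
  * (if odd m then m%:R + b else m%:R + a + 1).
Definition U3 a b c (m : nat) := (1 - c) * (1 - (-1) ^+ m * c) / (2 * m%:R + a + b)
  * (if odd m then m%:R + b else m%:R + b - 1).

Lemma R3 a b c x m : -1 < a -> 1 < b -> 1 - c ^+ 2 != 0 -> 1 + c != 0 -> 1 - c != 0 ->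
  (x - c) ^+ 2 * bigJ m a b c x = E3 a b c m * bigJ m.+2 a (b - 2) (- c) x
    + Rr3 a b c m * bigJ m.+1 a (b - 2) (- c) x + U3 a b c m * bigJ m a (b - 2) (- c) x.
Proof.
move=> ha hb hD hc hc'.
pose p := (a + 1) / 2; pose h := (a + b) / 2.
have Hp : (a + 1) / 2 = p by [].
have He : (a + b) / 2 + 1 = h + 1%:R by [].
have He0 : (a + (b - 2)) / 2 + 1 = h + 0%:R by rewrite /h; field.
have hp : 0 < p by rewrite /p; lra.
have hh : 0 < h by rewrite /h; lra.
have hhp : 0 < h - p by rewrite /h /p; lra.
have Ea : a = 2 * p - 1 by rewrite /p; field.
have Eb : b = 2 * h - 2 * p + 1 by rewrite /h /p; field.
clearbody p h.
have bE := fun l => @bigJ_even _ a b c x l h 1 p Hp He.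
have bO := fun l => @bigJ_odd _ a b c x l h 1 p Hp He.
have bE' := fun l => @bigJ_even _ a (b - 2) (- c) x l h 0 p Hp He0.
have bO' := fun l => @bigJ_odd _ a (b - 2) (- c) x l h 0 p Hp He0.
have [l [->|->]] := evod m.
- case: l => [|l].
  + rewrite (bE 0) (bE' 1) (bO' 0) (bE' 0) /= !Fm0 Fm1; last by lra.
    rewrite /E3 /Rr3 /U3 -signr_odd /= -?muln2 ?natrM ?zzN.
    rewrite Ea Eb /zz. field; nz.
  + rewrite (bE l.+1) (bE' l.+2) (bO' l.+1) (bE' l.+1) /= /E3 /Rr3 /U3 -signr_odd /= odd_double /= -?muln2 ?natrM !zzN.
    have l0 : 0 <= l%:R :> R := ler0n _ _.
    have l1 : 0 <= l.+1%:R :> R := ler0n _ _.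
    have l2 : 0 <= l.+2%:R :> R := ler0n _ _.
    have X1 := solve1 _ (I4 c (zz c x) l.+1 hp hh).
    have X2 := solve2 _ (I5 c (zz c x) l.+1 hp hh).
    rewrite /= in X1 X2.
    rewrite X1 ?X2; try nz.
    rewrite Ea Eb /zz.
    field; nz.
- rewrite (bO l) (bO' l.+1) (bE' l.+1) (bO' l) /= /E3 /Rr3 /U3 -signr_odd /= odd_double /= -?muln2 ?natrM !zzN.
  have l0 : 0 <= l%:R :> R := ler0n _ _.
  have l1 : 0 <= l.+1%:R :> R := ler0n _ _.
  have X1 := solve2 _ (I6 c (zz c x) l hp hh).
  have X2 := solve1 _ (I7 c (zz c x) l hp hh).
  rewrite X1 ?X2; try nz.
  rewrite Ea Eb /zz.
  field; nz.
Qed.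
End R3.


Section TwoD.
Variable R : realFieldType.

Lemma rho_S (d y : R) k : y != 0 -> rho d k.+1 y = (y + (-1) ^+ k * d) * rho d k y.
Proof.
move=> y0; rewrite /rho /=; case: (boolP (odd k)) => ok /=.
- rewrite uphalf_half ok /= -signr_odd ok /= expr1 !exprS.
  field.
  by [].
- rewrite uphalf_half (negbTE ok) /= -signr_odd (negbTE ok) /= expr0 exprS.
  field; by [].
Qed.

Lemma oddkmk (k m : nat) : odd (k + m + k) = odd m.
Proof. by rewrite addnC addnA addnn oddD odd_double. Qed.

Lemma calJ_nat (al be ga de x y : R) (n j : nat) :
  calJ al be ga de n j x y = if (j <= n)%N then calJnat al be ga de n j x y else 0.
Proof. by rewrite /calJ lez_nat /=. Qed.

Lemma calJ_negj (al be ga de x y : R) (m : int) : calJ al be ga de m (-1) x y = 0.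
Proof. by rewrite /calJ. Qed.

Lemma calJ_negm (al be ga de x y : R) (j : int) : calJ al be ga de (-1) j x y = 0.
Proof. rewrite /calJ; case: ifP => // /andP [h1 h2]; exfalso; lia. Qed.

End TwoD.


Section Coef.
Variable R : realFieldType.
Variables (al be ga de : R).


Ltac prep k m := rewrite /parsel oddkmk /dlt ?exprS ?exprD -[(-1) ^+ k]signr_odd -[(-1) ^+ m]signr_odd ?natrD;
  have k0 : 0 <= k%:R :> R := ler0n _ _; have m0 : 0 <= m%:R :> R := ler0n _ _.

Lemma aT_eq k m : -1 < al -> -1 < be -> -1 < ga -> aT al be ga de (k + m) k = A1 al (2 * k%:R + be + ga + 1) ((-1) ^+ k * de) m.
Proof.
move=> hal hbe hga; rewrite /aT /A1; prep k m.
case: (odd k); case: (odd m) => /=; rewrite ?expr0 ?expr1; field; nz.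
Qed.


Lemma cT_eq k m : -1 < al -> -1 < be -> -1 < ga ->
  cT al be ga de (k + m) k = C1 al (2 * k%:R + be + ga + 1) ((-1) ^+ k * de) m.
Proof.
move=> hal hbe hga; case: (posnP m) => [->|mp].
  by rewrite /cT /C1 /parsel addn0 addnn odd_double /= subrr mulr0n !mulr0.
have m1 : 1 <= m%:R :> R by rewrite ler1n.
rewrite /cT /C1; prep k m.
case: (odd k); case: (odd m) => /=; rewrite ?expr0 ?expr1; field; nz.
Qed.

Lemma gT_eq k m : -1 < al -> -1 < be -> -1 < ga -> 1 + de != 0 -> 1 - de != 0 ->
  gT al be ga de (k + m) k = sigmaT be ga k * G2 al (2 * k%:R + be + ga + 1) ((-1) ^+ k * de) m.
Proof.
move=> hal hbe hga hd1 hd2.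
have hd3 : 1 + -1 * de != 0 by rewrite mulN1r.
have hd4 : 1 + 1 * de != 0 by rewrite mul1r.
have hd5 : 1 - -1 * de != 0 by rewrite mulN1r opprK.
have hd6 : 1 - 1 * de != 0 by rewrite mul1r.
 rewrite /gT /G2; prep k m.
case: (odd k); case: (odd m) => /=; rewrite ?expr0 ?expr1; field; nz.
Qed.

Lemma tT_eq k m : -1 < al -> -1 < be -> -1 < ga -> 1 + de != 0 -> 1 - de != 0 ->
  tT al be ga de (k + m) k = sigmaT be ga k * T2 al (2 * k%:R + be + ga + 1) ((-1) ^+ k * de) m.
Proof.
move=> hal hbe hga hd1 hd2.
have hd3 : 1 + -1 * de != 0 by rewrite mulN1r.
have hd4 : 1 + 1 * de != 0 by rewrite mul1r.
have hd5 : 1 - -1 * de != 0 by rewrite mulN1r opprK.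
have hd6 : 1 - 1 * de != 0 by rewrite mul1r.
 case: (posnP m) => [->|mp].
  by rewrite /tT /T2 /parsel addn0 addnn odd_double /= subrr mulr0n !mulr0.
have m1 : 1 <= m%:R :> R by rewrite ler1n.
rewrite /tT /T2 /zT; prep k m.
case: (odd k); case: (odd m) => /=; rewrite ?expr0 ?expr1; field; nz.
Qed.

Lemma wT_eq k m : -1 < al -> -1 < be -> -1 < ga -> 1 + de != 0 -> 1 - de != 0 ->
  wT al be ga de (k + m) k = sigmaT be ga k * W2 al (2 * k%:R + be + ga + 1) ((-1) ^+ k * de) m.
Proof.
move=> hal hbe hga hd1 hd2.
have hd3 : 1 + -1 * de != 0 by rewrite mulN1r.
have hd4 : 1 + 1 * de != 0 by rewrite mul1r.
have hd5 : 1 - -1 * de != 0 by rewrite mulN1r opprK.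
have hd6 : 1 - 1 * de != 0 by rewrite mul1r.
 case: (leqP m 1) => [|mp].
  case: m => [_|[_|//]].
  - by rewrite /wT /W2 /parsel addn0 addnn odd_double /= subrr mulr0n !mulr0.
  - rewrite /wT /W2 /parsel oddkmk /= natrD.
    have -> : k%:R + 1%:R - k%:R - 1 = 0 :> R by ring.
    by rewrite subrr !mulr0.
have m1 : 2 <= m%:R :> R by rewrite (ler_nat _ 2).
rewrite /wT /W2; prep k m.
case: (odd k); case: (odd m) => /=; rewrite ?expr0 ?expr1; field; nz.
Qed.

Lemma eT_eq k m : -1 < al -> -1 < be -> -1 < ga ->
  eT al be ga de (k + m) k = tauT be ga k * E3 al (2 * k%:R + be + ga + 1) ((-1) ^+ k * de) m.
Proof.
move=> hal hbe hga; rewrite /eT /E3; prep k m.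
case: (odd k); case: (odd m) => /=; rewrite ?expr0 ?expr1; field; nz.
Qed.

Lemma rT_eq k m : -1 < al -> -1 < be -> -1 < ga -> (0 < k)%N ->
  rT al be ga de (k + m) k = tauT be ga k * Rr3 al (2 * k%:R + be + ga + 1) ((-1) ^+ k * de) m.
Proof.
move=> hal hbe hga; case: k => [|k] // _.
rewrite /rT /Rr3 /zT; prep k m.
have k1 : 0 <= k.+1%:R :> R := ler0n _ _.
case: (odd k); case: (odd m) => /=; rewrite ?expr0 ?expr1; field; nz.
Qed.

Lemma uT_eq k m : -1 < al -> -1 < be -> -1 < ga -> (0 < k)%N ->
  uT al be ga de (k + m) k = tauT be ga k * U3 al (2 * k%:R + be + ga + 1) ((-1) ^+ k * de) m.
Proof.
move=> hal hbe hga; case: k => [|k] // _.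
rewrite /uT /U3; prep k m.
have k1 : 0 <= k.+1%:R :> R := ler0n _ _.
case: (odd k); case: (odd m) => /=; rewrite ?expr0 ?expr1; field; nz.
Qed.

Lemma sigA k (y : R) : -1 < be -> -1 < ga -> y != 0 ->
  A1 ga be (de / y) k * y = (y + (-1) ^+ k * de) * sigmaT be ga k.
Proof.
move=> hbe hga y0; rewrite /A1 /sigmaT /phi -signr_odd.
have k0 : 0 <= k%:R :> R := ler0n _ _.
case: (odd k) => /=; rewrite ?expr0 ?expr1; field; nz.
Qed.

Lemma tauC k (y : R) : -1 < be -> -1 < ga -> y != 0 ->
  C1 ga be (de / y) k * y = (y - (-1) ^+ k * de) * tauT be ga k.
Proof.
move=> hbe hga y0; case: k => [|k].
  by rewrite /C1 /tauT /phi /= !mulr0n !(mulr0, mul0r, addr0, add0r).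
rewrite /C1 /tauT /phi -signr_odd.
have k0 : 0 <= k.+1%:R :> R := ler0n _ _.
have k0' : 0 <= k%:R :> R := ler0n _ _.
case: (odd k.+1) => /=; rewrite ?expr0 ?expr1; field; nz.
Qed.

End Coef.


Section Fin.
Variable R : realFieldType.

Lemma C1_0 (a b c : R) : C1 a b c 0 = 0.
Proof. by rewrite /C1 /= mulr0n mulr0. Qed.
Lemma T2_0 (a b c : R) : T2 a b c 0 = 0.
Proof. by rewrite /T2 /= mulr0n mulr0. Qed.
Lemma W2_0 (a b c : R) : W2 a b c 0 = 0.
Proof. by rewrite /W2 /= mulr0n mulr0. Qed.
Lemma W2_1 (a b c : R) : W2 a b c 1 = 0.
Proof. by rewrite /W2 /= subrr mulr0. Qed.

Lemma sgn_nz (d : R) (j : nat) : d != 1 -> d != -1 ->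
  [/\ 1 + (-1) ^+ j * d != 0, 1 - (-1) ^+ j * d != 0 & 1 - ((-1) ^+ j * d) ^+ 2 != 0].
Proof.
move=> d1 d2.
have h1 : 1 + d != 0 by rewrite addrC addr_eq0.
have h2 : 1 - d != 0 by rewrite subr_eq0 eq_sym.
have h3 : 1 - d ^+ 2 != 0.
  have -> : 1 - d ^+ 2 = (1 - d) * (1 + d) by ring.
  by rewrite mulf_neq0.
by rewrite -signr_odd; case: (odd j); rewrite /= ?expr0 ?expr1 ?mul1r ?mulN1r ?sqrrN ?opprK; split.
Qed.

Lemma Jnat (al be ga de x y : R) (N j : nat) : (j <= N)%N ->
  calJ al be ga de N j x y = bigJ (N - j) al (2 * j%:R + be + ga + 1) ((-1) ^+ j * de) y
     * rho de j y * bigJ j ga be (de / y) (x / y).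
Proof. by move=> jN; rewrite calJ_nat jN. Qed.

Lemma Jzero (al be ga de x y : R) (N j : nat) : (N < j)%N -> calJ al be ga de N j x y = 0.
Proof. by move=> jN; rewrite calJ_nat leqNgt jN. Qed.

End Fin.

Lemma zS (n : nat) : (n%:Z + 1 = n.+1%:Z)%R.
Proof. by rewrite -addn1 PoszD. Qed.
Lemma zP (n : nat) : (n.+1%:Z - 1 = n%:Z)%R.
Proof. by rewrite -zS addrK. Qed.
Lemma zN1 : ((0%N)%:Z - 1 = - 1 :> int)%R.
Proof. by []. Qed.

Lemma leA (k m : nat) : (k.+1 <= (k + m).+2)%N. Proof. lia. Qed.
Lemma leB (k m : nat) : (k.+1 <= (k + m).+1)%N. Proof. lia. Qed.
Lemma leC (k m : nat) : (k <= (k + m).+1)%N. Proof. lia. Qed.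
Lemma leD (k m : nat) : (k <= (k + m).+2)%N. Proof. lia. Qed.
Lemma subA (k m : nat) : ((k + m).+2 - k.+1 = m.+1)%N. Proof. lia. Qed.
Lemma subB (k m : nat) : ((k + m).+1 - k.+1 = m)%N. Proof. lia. Qed.
Lemma subC (k m : nat) : ((k + m).+1 - k = m.+1)%N. Proof. lia. Qed.
Lemma subD (k m : nat) : ((k + m).+2 - k = m.+2)%N. Proof. lia. Qed.
Lemma subE (k m : nat) : ((k + m) - k = m)%N. Proof. lia. Qed.

Section Fin2.
Variable R : realFieldType.
Lemma ypm (y d : R) (j : nat) : y ^+ 2 != d ^+ 2 ->
  y + (-1) ^+ j * d != 0 /\ y - (-1) ^+ j * d != 0.
Proof.
move=> yd.
have : (y - d) * (y + d) != 0.
  have -> : (y - d) * (y + d) = y ^+ 2 - d ^+ 2 by ring.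
  by rewrite subr_eq0.
rewrite mulf_eq0 negb_or => /andP [h1 h2].
rewrite -signr_odd; case: (odd j); rewrite /= ?expr0 ?expr1 ?mul1r ?mulN1r ?opprK //.
Qed.

Lemma qnz (y d : R) : y != 0 -> y ^+ 2 != d ^+ 2 -> 1 - (d / y) ^+ 2 != 0 /\ 1 + d / y != 0.
Proof.
move=> y0 yd; have [h1 h2] := ypm 0 yd; rewrite expr0 mul1r in h1 h2.
split.
  have -> : 1 - (d / y) ^+ 2 = (y - d) * (y + d) / y ^+ 2 by field.
  by rewrite !mulf_neq0 // invr_neq0 // expf_neq0.
have -> : 1 + d / y = (y + d) / y by field.
by rewrite mulf_neq0 // invr_neq0.
Qed.
End Fin2.


Unset Implicit Arguments.

Theorem proposition3p2 (R : realFieldType) (alpha beta gamma delta : R) :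
  -1 < alpha -> -1 < beta -> -1 < gamma -> delta != 1 -> delta != -1 ->
  forall (n k : nat), (k <= n)%N ->
  forall x y : R, y != 0 -> y ^+ 2 != delta ^+ 2 ->
  let J := fun (m j : int) => calJ alpha beta gamma delta m j x y in
  let n' := n%:Z in let k' := k%:Z in
  y * J n' k' =
    aT alpha beta gamma delta n k * J (n' + 1) k'
    + bT alpha beta gamma delta n k * J n' k'
    + cT alpha beta gamma delta n k * J (n' - 1) k'
  /\
  x * J n' k' =
    eT alpha beta gamma delta n k * J (n' + 1) (k' - 1)
    + fT alpha beta gamma delta n k * J (n' + 1) k'
    + gT alpha beta gamma delta n k * J (n' + 1) (k' + 1)
    + rT alpha beta gamma delta n k * J n' (k' - 1)
    + sT alpha beta gamma delta n k * J n' k'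
    + tT alpha beta gamma delta n k * J n' (k' + 1)
    + uT alpha beta gamma delta n k * J (n' - 1) (k' - 1)
    + vT alpha beta gamma delta n k * J (n' - 1) k'
    + wT alpha beta gamma delta n k * J (n' - 1) (k' + 1).
Proof.
move=> ha hb hg d1 d2 n k kn x y y0 yd J n' k'.
rewrite /J /n' /k' {J n' k'}.
have [m ->] : exists m, n = (k + m)%N by exists (n - k)%N; rewrite subnKC.
have hd1 : 1 + delta != 0 by rewrite addrC addr_eq0.
have hd2 : 1 - delta != 0 by rewrite subr_eq0 eq_sym.
have k0 : 0 <= k%:R :> R := ler0n _ _.
have hbk : -1 < 2 * k%:R + beta + gamma + 1 by lra.
have [hc1 hc2 hc3] := sgn_nz k d1 d2.
set CJ := calJ alpha beta gamma delta.
have B2 : y * CJ (k + m)%N k x y = aT alpha beta gamma delta (k + m) k * CJ ((k + m)%N%:Z + 1) k x y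
    + bT alpha beta gamma delta (k + m) k * CJ (k + m)%N k x y
    + cT alpha beta gamma delta (k + m) k * CJ ((k + m)%N%:Z - 1) k x y.
  rewrite /bT (@aT_eq R alpha beta gamma delta k m ha hb hg) (@cT_eq R alpha beta gamma delta k m ha hb hg).
  rewrite zS.
  rewrite /CJ !Jnat ?leq_addr ?leqW ?leq_addr // -addnS !addKn.
  have HR := R1 y m ha hbk hc3 hc1.
  case: m HR => [|m] HR.
    rewrite C1_0 in HR *; rewrite mul0r addr0.
    set A := A1 _ _ _ 0 in HR *.
    by rewrite !mulrA HR; ring.
  rewrite addnS zP Jnat ?leq_addr // addKn /=.
  set A := A1 _ _ _ m.+1 in HR *; set C := C1 _ _ _ m.+1 in HR *.
  by rewrite !mulrA HR; ring.
have Psh : forall i, bigJ i alpha (2 * k.+1%:R + beta + gamma + 1) ((-1) ^+ k.+1 * delta) y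
    = bigJ i alpha (2 * k%:R + beta + gamma + 1 + 2) (- ((-1) ^+ k * delta)) y.
  by move=> i; congr (bigJ _ _ _ _ _); [ring | rewrite exprS mulN1r mulNr].
have B1 : sigmaT beta gamma k * (bigJ m alpha (2 * k%:R + beta + gamma + 1) ((-1) ^+ k * delta) y
      * rho delta k.+1 y * bigJ k.+1 gamma beta (delta / y) (x / y))
    = gT alpha beta gamma delta (k + m) k * CJ ((k + m)%N%:Z + 1) (k%:Z + 1) x y
    + tT alpha beta gamma delta (k + m) k * CJ (k + m)%N%:Z (k%:Z + 1) x y
    + wT alpha beta gamma delta (k + m) k * CJ ((k + m)%N%:Z - 1) (k%:Z + 1) x y.
  clear B2.
  rewrite (@gT_eq R alpha beta gamma delta k m ha hb hg hd1 hd2)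
    (@tT_eq R alpha beta gamma delta k m ha hb hg hd1 hd2)
    (@wT_eq R alpha beta gamma delta k m ha hb hg hd1 hd2) !zS.
  have HR := R2 y m ha hbk hc3 hc1 hc2.
  rewrite /CJ Jnat; last by rewrite ltnS leq_addr.
  rewrite subSS addKn Psh.
  case: m HR => [|[|m]] HR.
  - rewrite T2_0 W2_0 in HR *; rewrite !mulr0 !mul0r !addr0 /=.
    set G := G2 _ _ _ 0 in HR *.
    by rewrite HR; ring.
  - rewrite W2_1 in HR *; rewrite !mulr0 !mul0r !addr0 /=.
    rewrite Jnat; last by rewrite addn1.
    rewrite addn1 subnn Psh.
    set G := G2 _ _ _ 1 in HR *; set T := T2 _ _ _ 1 in HR *.
    by rewrite HR; ring.
  - rewrite !addnS zP !Jnat ?leA ?leB // subA subB !Psh /=.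
    set G := G2 _ _ _ m.+2 in HR *; set T := T2 _ _ _ m.+2 in HR *; set W := W2 _ _ _ m.+2 in HR *.
    by rewrite HR; ring.
have [hy1 hy2] := ypm k yd.
have [hq1 hq2] := qnz y0 yd.
have B4 : x * CJ (k + m)%N%:Z k x y = sigmaT beta gamma k *
      (bigJ m alpha (2 * k%:R + beta + gamma + 1) ((-1) ^+ k * delta) y
        * rho delta k.+1 y * bigJ k.+1 gamma beta (delta / y) (x / y))
    + ((1 - sigmaT beta gamma k - tauT beta gamma k) * (y * CJ (k + m)%N%:Z k x y)
       - (-1) ^+ k * delta * (sigmaT beta gamma k - tauT beta gamma k) * CJ (k + m)%N%:Z k x y)
    + (eT alpha beta gamma delta (k + m) k * CJ ((k + m)%N%:Z + 1) (k%:Z - 1) x y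
       + rT alpha beta gamma delta (k + m) k * CJ (k + m)%N%:Z (k%:Z - 1) x y
       + uT alpha beta gamma delta (k + m) k * CJ ((k + m)%N%:Z - 1) (k%:Z - 1) x y).
  clear B1 B2.
  have HQ := R1 (x / y) k hg hb hq1 hq2.
  have hA := sigA delta k hb hg y0.
  have hC := tauC delta k hb hg y0.
  have hs : sigmaT beta gamma k = A1 gamma beta (delta / y) k * y / (y + (-1) ^+ k * delta).
    by rewrite hA; field.
  have ht : tauT beta gamma k = C1 gamma beta (delta / y) k * y / (y - (-1) ^+ k * delta).
    by rewrite hC; field.
  rewrite /CJ Jnat ?leq_addr // subE.
  destruct k as [|j].
  - rewrite expr0 mul1r in hy1 hy2.
    rewrite zN1 !calJ_negj !mulr0 !addr0.
    rewrite C1_0 in HQ ht.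
    rewrite hs ht (rho_S delta 0 y0) /=.
    set P := bigJ m _ _ _ _; set Q0 := bigJ 0 _ _ _ _; set r0 := rho delta 0 y.
    have -> : x * (P * r0 * Q0) = P * r0 * y * ((x / y) * Q0) by field.
    rewrite HQ /=.
    rewrite /P /Q0 /r0 expr0 mul1r; field; nz.
  have hbk' : 1 < 2 * j.+1%:R + beta + gamma + 1.
    have : 1 <= j.+1%:R :> R by rewrite ler1n.
    move=> *; lra.
  have Psh2 : forall i, bigJ i alpha (2 * j%:R + beta + gamma + 1) ((-1) ^+ j * delta) y
      = bigJ i alpha (2 * j.+1%:R + beta + gamma + 1 - 2) (- ((-1) ^+ j.+1 * delta)) y.
    by move=> i; congr (bigJ _ _ _ _ _); [rewrite -addn1 natrD; ring | rewrite exprS mulN1r mulNr opprK].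
  have B3 : eT alpha beta gamma delta (j.+1 + m) j.+1 * calJ alpha beta gamma delta ((j.+1 + m)%N%:Z + 1) (j.+1%:Z - 1) x y
      + rT alpha beta gamma delta (j.+1 + m) j.+1 * calJ alpha beta gamma delta (j.+1 + m)%N%:Z (j.+1%:Z - 1) x y
      + uT alpha beta gamma delta (j.+1 + m) j.+1 * calJ alpha beta gamma delta ((j.+1 + m)%N%:Z - 1) (j.+1%:Z - 1) x y
      = tauT beta gamma j.+1 * ((y - (-1) ^+ j.+1 * delta) ^+ 2
          * bigJ m alpha (2 * j.+1%:R + beta + gamma + 1) ((-1) ^+ j.+1 * delta) y)
          * rho delta j y * bigJ j gamma beta (delta / y) (x / y).
    rewrite (@eT_eq R alpha beta gamma delta j.+1 m ha hb hg)
      (@rT_eq R alpha beta gamma delta j.+1 m ha hb hg (ltn0Sn j))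
      (@uT_eq R alpha beta gamma delta j.+1 m ha hb hg (ltn0Sn j)).
    rewrite addSn !zS !zP !Jnat ?leD ?leC ?leq_addr // subD subC subE !Psh2.
    have HR3 := R3 y m ha hbk' hc3 hc1 hc2.
    by rewrite HR3; ring.
  rewrite B3 (rho_S delta j.+1 y0) (rho_S delta j y0) hs ht.
  set P := bigJ m _ _ _ _; set Qk := bigJ j.+1 _ _ _ _; set r := rho delta j y.
  have -> : x * (P * ((y + (-1) ^+ j * delta) * r) * Qk)
      = P * ((y + (-1) ^+ j * delta) * r) * y * ((x / y) * Qk) by field.
  rewrite HQ /= /P /Qk /r.
  rewrite exprS mulN1r in hy1 hy2 *.
  field; nz.
split; first exact: B2.
rewrite B4 B1 B2 /fT /sT /vT /dlt; ring.
Qed.
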